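(* Let $\mathbb F_2^+$ be the free monoid on $\{a,b\}$ and $\mathbb N$ the additive monoid, both regarded as one-object categories. Define a left action of $\mathbb F_2^+$ on $\mathbb N$ by $w\triangleright n=n$, and a right action of $\mathbb N$ on $\mathbb F_2^+$ by $w\triangleleft 0=w$ and $w\triangleleft n=a^{|w|}$ for $n\ge1$ (where $|w|$ is word length). Then $(\mathbb F_2^+,\mathbb N)$ is a matched pair, the Zappa–Szép product $\mathcal X=\mathbb N\bowtie\mathbb F_2^+$ is a finitely aligned left-cancellative monoid, the inclusion $\mathbb F_2^+\hookrightarrow\mathcal X$ is not concordant, and there is no $*$-homomorphism $\Phi:\mathcal TC^*(\mathbb F_2^+,1)\to\mathcal TC^*(\mathcal X,1)$ with $\Phi(t^{\mathbb F_2^+}_w)=t^{\mathcal X}_w$ for all $w\in\mathbb F_2^+$.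
   Context: A matched pair $(\mathcal C,\mathcal D)$ of small categories with $\mathcal C^0=\mathcal D^0$ consists of a left action $c\triangleright d\in\mathcal D$ of $\mathcal C$ on $\mathcal D$ and a right action $c\triangleleft d\in\mathcal C$ of $\mathcal D$ on $\mathcal C$ (defined when $s(c)=r(d)$) such that $s(c\triangleright d)=r(c\triangleleft d)$, $c\triangleright(d_1d_2)=(c\triangleright d_1)((c\triangleleft d_1)\triangleright d_2)$ and $(c_1c_2)\triangleleft d=(c_1\triangleleft(c_2\triangleright d))(c_2\triangleleft d)$. The Zappa–Szép product $\mathcal D\bowtie\mathcal C$ has morphisms $dc$ ($d\in\mathcal D$, $c\in\mathcal C$) with product $d_1c_1\,d_2c_2=d_1(c_1\triangleright d_2)(c_1\triangleleft d_2)c_2$; it contains $\mathcal C$ and $\mathcal D$. Left-cancellative: $xy=xz\Rightarrow y=z$; finitely aligned: for all $x,y$ there is finite $F$ with $x\mathcal X\cap y\mathcal X=\bigcup_{c\in F}c\mathcal X$; independent $F$: $a\notin a'\mathcal X$ for distinct $a,a'\in F$. A subcategory $\mathcal C\subseteq\mathcal X$ is concordant if for all $c_1,c_2\in\mathcal C$ with $c_1\mathcal X\cap c_2\mathcal X\neq\emptyset$ there is a finite independent $F\subseteq\mathcal C$ with $c_1\mathcal C\cap c_2\mathcal C=F\mathcal C$ such that whenever $c_1x_1=c_2x_2$ in $\mathcal X$, there exist $a_1,a_2$ with $c_1a_1=c_2a_2\in F$ and $y\in\mathcal X$ with $x_i=a_iy$. $\mathcal TC^*(\mathcal C,1)$ is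 the universal $C^*$-algebra generated by partial isometries $t_c$, $c\in\mathcal C$, with $t_{c_1}t_{c_2}=t_{c_1c_2}$ (composable), $t_c^*t_c=t_{s(c)}$, and $t_{c_1}t_{c_1}^*t_{c_2}t_{c_2}^*=\bigvee_{c\in F}t_ct_c^*$ for every finite independent $F$ with $c_1\mathcal C\cap c_2\mathcal C=\bigcup_{c\in F}c\mathcal C$ (this product is $0$ if the intersection is empty); $\bigvee$ = supremum of commuting projections. *)

(* Defs.v *)
From HB Require Import structures.
From mathcomp Require Import all_boot all_order all_algebra.
From mathcomp Require Import complex.
From mathcomp Require Import Rstruct.
Set Implicit Arguments. Unset Strict Implicit. Unset Printing Implicit Defensive.
Import GRing.Theory Num.Theory.
Local Open Scope ring_scope.

Definition RR := Rdefinitions.R.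
Definition CC := complex RR.
Definition cabs (z : CC) : RR :=
  let: Complex a b := z in Num.sqrt (a ^+ 2 + b ^+ 2).

Record CstarAlg := {
  ca_car :> lmodType CC;
  ca_mul : ca_car -> ca_car -> ca_car;
  ca_star : ca_car -> ca_car;
  ca_norm : ca_car -> RR;
  ca_mulA : forall x y z, ca_mul x (ca_mul y z) = ca_mul (ca_mul x y) z;
  ca_mul_linl : forall (a : CC) x y z,
      ca_mul (a *: x + y) z = a *: ca_mul x z + ca_mul y z;
  ca_mul_linr : forall (a : CC) x y z,
      ca_mul z (a *: x + y) = a *: ca_mul z x + ca_mul z y;
  ca_star_antilin : forall (a : CC) x y,
      ca_star (a *: x + y) = (a^*)%C *: ca_star x + ca_star y;
  ca_starK : forall x, ca_star (ca_star x) = x;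
  ca_star_mul : forall x y, ca_star (ca_mul x y) = ca_mul (ca_star y) (ca_star x);
  ca_norm_eq0 : forall x, ca_norm x = 0 -> x = 0;
  ca_normD : forall x y, ca_norm (x + y) <= ca_norm x + ca_norm y;
  ca_normZ : forall (a : CC) x, ca_norm (a *: x) = cabs a * ca_norm x;
  ca_normM : forall x y, ca_norm (ca_mul x y) <= ca_norm x * ca_norm y;
  ca_cstar : forall x, ca_norm (ca_mul (ca_star x) x) = ca_norm x ^+ 2;
  ca_complete : forall u : nat -> ca_car,
      (forall eps : RR, 0 < eps -> exists N, forall m n, (N <= m)%N -> (N <= n)%N ->
          ca_norm (u m - u n) < eps) ->
      exists l, forall eps : RR, 0 < eps -> exists N, forall n, (N <= n)%N ->
          ca_norm (u n - l) < eps
}.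

Definition is_star_hom (A B : CstarAlg) (phi : A -> B) : Prop :=
  (forall (a : CC) x y, phi (a *: x + y) = a *: phi x + phi y) /\
  (forall x y, phi (ca_mul x y) = ca_mul (phi x) (phi y)) /\
  (forall x, phi (ca_star x) = ca_star (phi x)).

(* supremum of (commuting) projections: p \/ q = p + q - pq, iterated
   over a finite list; the empty supremum is 0 *)
Definition pjoin (A : CstarAlg) (p q : A) : A := p + q - ca_mul p q.
Definition bigjoin (A : CstarAlg) (l : list A) : A := foldr (@pjoin A) 0 l.

(* Monoids (= one-object small categories), given by mul and unit      *)
Definition is_monoid (M : Type) (mul : M -> M -> M) (e : M) : Prop :=
  (forall x y z, mul x (mul y z) = mul (mul x y) z) /\
  (forall x, mul e x = x) /\ (forall x, mul x e = x).

Definition left_cancellative (M : Type) (mul : M -> M -> M) : Prop :=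
  forall x y z, mul x y = mul x z -> y = z.

Definition in_rideal (M : Type) (mul : M -> M -> M) (x z : M) : Prop :=
  exists u, z = mul x u.

Definition finitely_aligned (M : Type) (mul : M -> M -> M) : Prop :=
  forall x y, exists F : list M, forall z,
    (in_rideal mul x z /\ in_rideal mul y z) <->
    (exists c, List.In c F /\ in_rideal mul c z).

Definition independent (M : Type) (mul : M -> M -> M) (F : list M) : Prop :=
  forall a a', List.In a F -> List.In a' F -> a <> a' -> ~ in_rideal mul a' a.

(* lact c d = c |> d (in D),  ract c d = c <| d (in C)                 *)
Definition matched_pair (C D : Type) (mulC : C -> C -> C) (eC : C)
    (mulD : D -> D -> D) (eD : D)
    (lact : C -> D -> D) (ract : C -> D -> C) : Prop :=
  (forall d, lact eC d = d) /\
  (forall c1 c2 d, lact (mulC c1 c2) d = lact c1 (lact c2 d)) /\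
  (forall c, ract c eD = c) /\
  (forall c d1 d2, ract c (mulD d1 d2) = ract (ract c d1) d2) /\
  (* identities are preserved (r(c |> d) = r(c), s(c <| d) = s(d)) *)
  (forall c, lact c eD = eD) /\
  (forall d, ract eC d = eC) /\
  (forall c d1 d2, lact c (mulD d1 d2) = mulD (lact c d1) (lact (ract c d1) d2)) /\
  (forall c1 c2 d, ract (mulC c1 c2) d = mulC (ract c1 (lact c2 d)) (ract c2 d)).

(* Zappa-Szep product D |><| C: the element d c is the pair (d, c) and
   (d1 c1)(d2 c2) = d1 (c1 |> d2) (c1 <| d2) c2 *)
Definition zs_mul (C D : Type) (mulC : C -> C -> C) (mulD : D -> D -> D)
    (lact : C -> D -> D) (ract : C -> D -> C) (x y : D * C) : D * C :=
  (mulD x.1 (lact x.2 y.1), mulC (ract x.2 y.1) y.2).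
Definition zs_unit (C D : Type) (eC : C) (eD : D) : D * C := (eD, eC).
Definition zs_inclC (C D : Type) (eD : D) (c : C) : D * C := (eD, c).

Definition concordant (C X : Type) (mulC : C -> C -> C) (mulX : X -> X -> X)
    (iota : C -> X) : Prop :=
  forall c1 c2 : C,
    (exists x1 x2, mulX (iota c1) x1 = mulX (iota c2) x2) ->
    exists F : list C,
      (forall a a', List.In a F -> List.In a' F -> a <> a' ->
          ~ in_rideal mulX (iota a') (iota a)) /\
      (forall c, (in_rideal mulC c1 c /\ in_rideal mulC c2 c) <->
                 (exists f, List.In f F /\ in_rideal mulC f c)) /\
      (forall x1 x2, mulX (iota c1) x1 = mulX (iota c2) x2 ->
         exists a1 a2, mulC c1 a1 = mulC c2 a2 /\ List.In (mulC c1 a1) F /\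
           exists y, x1 = mulX (iota a1) y /\ x2 = mulX (iota a2) y).

Definition is_TC_rep (M : Type) (mul : M -> M -> M) (e : M)
    (A : CstarAlg) (t : M -> A) : Prop :=
  (forall c1 c2, ca_mul (t c1) (t c2) = t (mul c1 c2)) /\
  (forall c, ca_mul (ca_star (t c)) (t c) = t e) /\
  (forall c1 c2 (F : list M),
     independent mul F ->
     (forall c, (in_rideal mul c1 c /\ in_rideal mul c2 c) <->
                (exists f, List.In f F /\ in_rideal mul f c)) ->
     let q := fun c => ca_mul (t c) (ca_star (t c)) in
     (forall f g, List.In f F -> List.In g F -> ca_mul (q f) (q g) = ca_mul (q g) (q f)) /\
     ca_mul (q c1) (q c2) = bigjoin (map q F)).

Definition is_universal_TC (M : Type) (mul : M -> M -> M) (e : M)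
    (A : CstarAlg) (t : M -> A) : Prop :=
  is_TC_rep mul e t /\
  forall (B : CstarAlg) (s : M -> B), is_TC_rep mul e s ->
    (exists phi : A -> B, is_star_hom phi /\ forall m, phi (t m) = s m) /\
    (forall phi1 phi2 : A -> B,
        is_star_hom phi1 -> (forall m, phi1 (t m) = s m) ->
        is_star_hom phi2 -> (forall m, phi2 (t m) = s m) ->
        forall x, phi1 x = phi2 x).

(* F2+ : free monoid on {a, b}; a letter is a bool, a = true, b = false *)
Definition F2p := seq bool.
Definition la : bool := true.
Definition lb : bool := false.
Definition F2mul (u v : F2p) : F2p := u ++ v.
Definition F2e : F2p := [::].
Definition Nmul (m n : nat) : nat := (m + n)%N.
Definition Ne : nat := 0%N.
Definition ex_lact (w : F2p) (n : nat) : nat := n.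
Definition ex_ract (w : F2p) (n : nat) : F2p :=
  if n is 0%N then w else nseq (size w) la.

Definition Xt := (nat * F2p)%type.
Definition Xmul : Xt -> Xt -> Xt := zs_mul F2mul Nmul ex_lact ex_ract.
Definition Xe : Xt := zs_unit F2e Ne.
Definition Xincl : F2p -> Xt := zs_inclC Ne.

(* Main.v *)
Require Import Defs.
From Stdlib Require Import Reals Classical.
From HB Require Import structures.
From mathcomp Require Import all_boot all_order all_algebra.
From mathcomp Require Import complex.
From mathcomp Require Import Rstruct.

Lemma ract_cat (u v : F2p) k : ex_ract (u ++ v) k = ex_ract u k ++ ex_ract v k.
Proof. by case: k => //= k; rewrite size_cat nseqD. Qed.

Lemma ract_ract (u : F2p) n k : ex_ract (ex_ract u n) k = ex_ract u (n + k).
Proof.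
case: n => [|n] /=; first by [].
by case: k => [|k] //=; rewrite size_nseq.
Qed.

Lemma mp : matched_pair F2mul F2e Nmul Ne ex_lact ex_ract.
Proof.
split; first by [].
split; first by [].
split; first by [].
split; first by move=> c d1 d2; rewrite /Nmul -ract_ract.
split; first by [].
split; first by case.
split; first by [].
by move=> c1 c2 d; rewrite /F2mul ract_cat.
Qed.

Lemma catI (T : Type) (s a b : seq T) : s ++ a = s ++ b -> a = b.
Proof. by elim: s => //= x s IH [] /IH. Qed.

Lemma Xassoc x y z : Xmul x (Xmul y z) = Xmul (Xmul x y) z.
Proof.
case: x => m u; case: y => n v; case: z => k w.
rewrite /Xmul /zs_mul /= /Nmul /ex_lact /F2mul addnA; congr pair.
by rewrite ract_cat ract_ract catA.
Qed.

Lemma Xmon : is_monoid Xmul Xe.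
Proof.
split; first exact: Xassoc.
split; first by case=> m u; case: m.
by case=> m u; rewrite /Xmul /zs_mul /= /Nmul addn0 /F2mul cats0.
Qed.

Lemma Xlc : left_cancellative Xmul.
Proof.
case=> m u [n v] [n' w]; rewrite /Xmul /zs_mul /= /Nmul /ex_lact /F2mul.
case=> /addnI e; subst n' => /catI -> //.
Qed.

Lemma memX m u p w : in_rideal Xmul (m, u) (p, w) <->
  (p = m /\ exists r, w = u ++ r) \/ (m < p /\ exists r, w = nseq (size u) la ++ r)%N.
Proof.
split.
- case=> [[k v]]; rewrite /Xmul /zs_mul /= /Nmul /ex_lact /F2mul; case=> -> ->.
  case: k => [|k] /=; first by left; rewrite addn0; split => //; exists v.
  by right; split; [rewrite addnS ltnS leq_addr | exists v].
- case=> [[-> [r ->]]|[lt [r ->]]].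
  + by exists (0%N, r); rewrite /Xmul /zs_mul /= /Nmul addn0.
  + exists ((p - m)%N, r); rewrite /Xmul /zs_mul /= /Nmul /ex_lact subnKC ?(ltnW lt) //.
    by case: (p - m)%N (subn_gt0 m p) => [|k] //; rewrite lt.
Qed.

Lemma in_rid_trans x c z : in_rideal Xmul x c -> in_rideal Xmul c z -> in_rideal Xmul x z.
Proof. by case=> a -> [b ->]; exists (Xmul a b); rewrite Xassoc. Qed.

Lemma in_rid_refl x : in_rideal Xmul x x.
Proof. by exists Xe; case: x => m u; rewrite /Xmul /zs_mul /= /Nmul addn0 /F2mul cats0. Qed.

Lemma cands_lemma (I : Xt -> Prop) (cands : list Xt) :
  (forall z, I z -> exists c, List.In c cands /\ I c /\ in_rideal Xmul c z) ->
  (forall c z, I c -> in_rideal Xmul c z -> I z) ->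
  exists F : list Xt, forall z, I z <-> (exists c, List.In c F /\ in_rideal Xmul c z).
Proof.
move=> h1 h2.
suff: exists F : list Xt, (forall c, List.In c F -> I c) /\
   forall c, List.In c cands -> I c -> List.In c F.
  case=> F [hF1 hF2]; exists F => z; split.
  + by move=> /h1 [c [hc [Ic hz]]]; exists c; split => //; apply: hF2.
  + by case=> c [hc hz]; apply: (h2 c) => //; apply: hF1.
elim: cands {h1} => [|c cs [F [hF1 hF2]]]; first by exists [::].
case: (classic (I c)) => Ic.
- exists (c :: F); split; first by move=> d /= [<-|/hF1].
  by move=> d /= [<-|hd] Id; [left|right; apply: hF2].
- exists F; split => // d /= [<-|hd] Id //; exact: hF2.
Qed.

Lemma prefix_cmp (T : Type) (u v r1 r2 : seq T) : u ++ r1 = v ++ r2 ->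
  (exists t, v = u ++ t) \/ (exists t, u = v ++ t).
Proof.
elim: u v => [|x u IH] [|y v] /=.
- by left; exists [::].
- by left; exists (y :: v).
- by right; exists (x :: u).
- case=> <- /IH [[t ->]|[t ->]]; [left|right]; by exists t.
Qed.

Lemma nseq_pre k l (hk : (k <= l)%N) : exists t, nseq l la = nseq k la ++ t.
Proof. by exists (nseq (l - k) la); rewrite -nseqD subnKC. Qed.

Lemma Xfa : finitely_aligned Xmul.
Proof.
case=> m u [n v].
set I := fun z => in_rideal Xmul (m, u) z /\ in_rideal Xmul (n, v) z.
apply: (@cands_lemma I [:: (m, u); (n, v); (m, nseq (size v) la); (n, nseq (size u) la);
   ((maxn m n).+1, nseq (maxn (size u) (size v)) la)]); last first.
  by move=> c z [h1 h2] hz; split; apply: in_rid_trans hz.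
case=> p w [/memX hx /memX hy].
case: hx => [[ep [r1 e1]]|[lp [r1 e1]]]; case: hy => [[eq [r2 e2]]|[lq [r2 e2]]].
- subst p; subst n; have e : u ++ r1 = v ++ r2 by rewrite -e1 -e2.
  move: e => /prefix_cmp [[t et]|[t et]].
  + exists (m, v); split; first by simpl; tauto.
    split; last by apply/memX; left; split => //; exists r2.
    split; last exact: in_rid_refl.
    by apply/memX; left; split => //; exists t.
  + exists (m, u); split; first by simpl; tauto.
    split; last by apply/memX; left; split => //; exists r1.
    split; first exact: in_rid_refl.
    by apply/memX; left; split => //; exists t.
- subst p; have e : u ++ r1 = nseq (size v) la ++ r2 by rewrite -e1 -e2.
  move: e => /prefix_cmp [[t et]|[t et]].
  + exists (m, nseq (size v) la); split; first by simpl; tauto.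
    split; last by apply/memX; left; split => //; exists r2.
    split; first by apply/memX; left; split => //; exists t.
    by apply/memX; right; split => //; exists [::]; rewrite cats0.
  + exists (m, u); split; first by simpl; tauto.
    split; last by apply/memX; left; split => //; exists r1.
    split; first exact: in_rid_refl.
    by apply/memX; right; split => //; exists t.
- subst p; have e : v ++ r2 = nseq (size u) la ++ r1 by rewrite -e1 -e2.
  move: e => /prefix_cmp [[t et]|[t et]].
  + exists (n, nseq (size u) la); split; first by simpl; tauto.
    split; last by apply/memX; left; split => //; exists r1.
    split; first by apply/memX; right; split => //; exists [::]; rewrite cats0.
    by apply/memX; left; split => //; exists t.
  + exists (n, v); split; first by simpl; tauto.
    split; last by apply/memX; left; split => //; exists r2.
    split; last exact: in_rid_refl.
    by apply/memX; right; split => //; exists t.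
- exists ((maxn m n).+1, nseq (maxn (size u) (size v)) la); split; first by simpl; tauto.
  have hw : exists r, w = nseq (maxn (size u) (size v)) la ++ r.
    case: (leqP (size u) (size v)) => h.
    + by exists r2.
    + by exists r1.
  split.
    split; apply/memX; right; (split; first by rewrite ltnS ?leq_maxl ?leq_maxr);
      apply: nseq_pre; by rewrite ?leq_maxl ?leq_maxr.
  apply/memX.
  have : ((maxn m n).+1 <= p)%N by rewrite gtn_max lp lq.
  rewrite leq_eqVlt => /orP [/eqP ->|lt]; first by left.
  by right; split => //; rewrite size_nseq.
Qed.

Lemma Xnc : ~ concordant F2mul Xmul Xincl.
Proof.
move=> hc.
have [|F [_ [_ h3]]] := hc [:: la] [:: lb].
  by exists (1%N, [::]), (1%N, [::]).
have [|a1 [a2 [e _]]] := h3 (1%N, [::]) (1%N, [::]) => //.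
Qed.

From mathcomp Require Import ring lra.
Import Order.TTheory GRing.Theory Num.Theory.
Local Open Scope ring_scope.
Lemma cabsE (z : CC) : cabs z = Num.sqrt (complex.Re z ^+ 2 + complex.Im z ^+ 2).
Proof. by case: z. Qed.

Lemma cabs_ge0 (z : CC) : 0 <= cabs z.
Proof. by rewrite cabsE sqrtr_ge0. Qed.

Lemma cabs_normc (z : CC) : `|z| = (cabs z)%:C%C.
Proof. by rewrite normc_def cabsE. Qed.

Lemma cabsD (x y : CC) : cabs (x + y) <= cabs x + cabs y.
Proof.
have := ler_normD x y; rewrite !cabs_normc -rmorphD /=.
by rewrite lecR.
Qed.

Lemma cabsM (x y : CC) : cabs (x * y) = cabs x * cabs y.
Proof.
have := normrM x y; rewrite !cabs_normc -rmorphM /=.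
by move=> [].
Qed.

Lemma cabs_eq0 (x : CC) : cabs x = 0 -> x = 0.
Proof. by move=> h; apply/eqP; rewrite -normr_eq0 cabs_normc h. Qed.

Lemma cabs_conjM (x : CC) : cabs ((x^*)%C * x) = cabs x ^+ 2.
Proof.
case: x => a b /=.
have e1 : a * a - - b * b = a ^+ 2 + b ^+ 2 by ring.
have e2 : a * b + - b * a = 0 by ring.
have h0 : 0 <= a ^+ 2 + b ^+ 2 by rewrite addr_ge0 // sqr_ge0.
rewrite e1 e2 expr0n /= addr0 sqrtr_sqr sqr_sqrtr //.
by rewrite ger0_norm.
Qed.

Lemma Re_le (z : CC) : `|complex.Re z| <= cabs z.
Proof.
rewrite cabsE -sqrtr_sqr ler_wsqrtr //.
by rewrite lerDl sqr_ge0.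
Qed.
Lemma Im_le (z : CC) : `|complex.Im z| <= cabs z.
Proof.
rewrite cabsE -sqrtr_sqr ler_wsqrtr //.
by rewrite lerDr sqr_ge0.
Qed.
Lemma cabs_le (z : CC) : cabs z <= `|complex.Re z| + `|complex.Im z|.
Proof.
rewrite cabsE; set a := complex.Re z; set b := complex.Im z.
have h : a ^+ 2 + b ^+ 2 <= (`|a| + `|b|) ^+ 2.
  have ha : `|a| ^+ 2 = a ^+ 2 by rewrite real_normK ?num_real.
  have hb : `|b| ^+ 2 = b ^+ 2 by rewrite real_normK ?num_real.
  have hp : 0 <= `|a| * `|b| by rewrite mulr_ge0.
  rewrite sqrrD ha hb; lra.
have := ler_wsqrtr h; rewrite sqrtr_sqr ger0_norm //.
by rewrite addr_ge0.
Qed.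

Lemma Re_sub (x y : CC) : complex.Re (x - y) = complex.Re x - complex.Re y.
Proof. by case: x; case: y. Qed.
Lemma Im_sub (x y : CC) : complex.Im (x - y) = complex.Im x - complex.Im y.
Proof. by case: x; case: y. Qed.

Lemma cauchy_comp (f : CC -> RR) (u : nat -> CC) :
  (forall z, `|f z| <= cabs z) -> (forall x y, f (x - y) = f x - f y) ->
  (forall eps : RR, 0 < eps -> exists N, forall m n, (N <= m)%N -> (N <= n)%N ->
          cabs (u m - u n) < eps) ->
  exists l, forall eps : RR, 0 < eps -> exists N, forall n, (N <= n)%N -> `|f (u n) - l| < eps.
Proof.
move=> hf hB hc.
have cc : Cauchy_crit (fun n => f (u n)).
  move=> eps /RltP heps; have [N hN] := hc eps heps.
  exists N => n m /ssrnat.leP hn /ssrnat.leP hm; apply/RltP; rewrite RdistE -hB.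
  exact: le_lt_trans (hf _) (hN _ _ hn hm).
have [l hl] := R_complete _ cc.
exists l => eps /RltP heps; have [N hN] := hl eps heps.
exists N => n /ssrnat.leP hn; have := hN n hn; rewrite RdistE => /RltP; done.
Qed.

Lemma CC_complete (u : nat -> CC) :
  (forall eps : RR, 0 < eps -> exists N, forall m n, (N <= m)%N -> (N <= n)%N ->
          cabs (u m - u n) < eps) ->
      exists l, forall eps : RR, 0 < eps -> exists N, forall n, (N <= n)%N ->
          cabs (u n - l) < eps.
Proof.
move=> hc.
have [l1 h1] := @cauchy_comp (@complex.Re _) u Re_le Re_sub hc.
have [l2 h2] := @cauchy_comp (@complex.Im _) u Im_le Im_sub hc.
exists (Complex l1 l2) => eps heps.
have he2 : 0 < eps / 2 by rewrite divr_gt0.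
have [N1 hN1] := h1 _ he2; have [N2 hN2] := h2 _ he2.
exists (maxn N1 N2) => n hn.
have hn1 : (N1 <= n)%N by apply: leq_trans hn; rewrite leq_maxl.
have hn2 : (N2 <= n)%N by apply: leq_trans hn; rewrite leq_maxr.
have e1 := hN1 n hn1; have e2 := hN2 n hn2.
apply: le_lt_trans (cabs_le _) _.
rewrite Re_sub Im_sub /=.
have -> : eps = eps / 2 + eps / 2 by rewrite -splitr.
exact: ltrD.
Qed.

Definition CCalg : CstarAlg.
Proof.
refine (@Build_CstarAlg (CC^o) (@GRing.mul CC) (@conjc RR) cabs _ _ _ _ _ _ _ _ _ _ _ _).
- by move=> x y z; rewrite mulrA.
- by move=> a x y z; rewrite /= mulrDl -mulrA.
- by move=> a x y z; rewrite /= mulrDr mulrCA.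
- by move=> a x y; rewrite /= rmorphD rmorphM.
- exact: conjcK.
- by move=> x y; rewrite rmorphM mulrC.
- exact: cabs_eq0.
- exact: cabsD.
- exact: cabsM.
- by move=> x y; rewrite cabsM.
- exact: cabs_conjM.
- exact: CC_complete.
Defined.

Lemma ca_mul0l (A : CstarAlg) (z : A) : ca_mul 0 z = 0.
Proof.
have h := ca_mul_linl 1 (0 : A) 0 z.
rewrite !scale1r addr0 in h.
by apply: (@addrI _ (ca_mul 0 z)); rewrite addr0 -h.
Qed.

Lemma hom0 (A B : CstarAlg) (Phi : A -> B) : is_star_hom Phi -> Phi 0 = 0.
Proof.
case=> hl _; have h := hl 1 0 0.
rewrite !scale1r addr0 in h.
by apply: (@addrI _ (Phi 0)); rewrite addr0 -h.
Qed.

Lemma ca_mul0r (A : CstarAlg) (z : A) : ca_mul z 0 = 0.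
Proof.
have h := ca_mul_linr 1 (0 : A) 0 z.
rewrite !scale1r addr0 in h.
by apply: (@addrI _ (ca_mul z 0)); rewrite addr0 -h.
Qed.

Section Rep.
Variables (M : Type) (mul : M -> M -> M) (e : M) (B : CstarAlg) (s : M -> B).
Hypothesis hmon : forall x, mul e x = x.
Hypothesis h1 : forall c1 c2, ca_mul (s c1) (s c2) = s (mul c1 c2).
Hypothesis h2 : forall c, ca_mul (ca_star (s c)) (s c) = s e.

Lemma starK_mul c y : ca_mul (ca_star (s c)) (s (mul c y)) = s y.
Proof. by rewrite -h1 ca_mulA h2 h1 hmon. Qed.

Lemma proj_mul c y :
  ca_mul (ca_mul (s c) (ca_star (s c))) (s (mul c y)) = s (mul c y).
Proof. by rewrite -ca_mulA starK_mul h1. Qed.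
End Rep.

Lemma pjoin1 (x : CCalg) : pjoin (1 : CCalg) x = 1.
Proof. by rewrite /pjoin /= mul1r addrK. Qed.

Lemma rep1 : is_TC_rep Xmul Xe (fun _ => (1 : CCalg)).
Proof.
split; first by move=> *; rewrite /= mulr1.
split; first by move=> *; rewrite /= oppr0 mulr1.
move=> [m u] [n v] F _ hF /=; split; first by move=> *; rewrite mulrC.
have [|f [hf _]] := (hF (((m + n).+1)%N, nseq (size u + size v) la)).1.
  split; apply/memX; right; (split; first by rewrite ltnS ?leq_addr ?leq_addl).
    by exists (nseq (size v) la); rewrite nseqD.
  by exists (nseq (size u) la); rewrite addnC nseqD.
clear hF; case: F hf => [[]|g F _] /=.
rewrite (_ : (1 * (1 -i* 0)%C : CC) = 1); last by rewrite mul1r oppr0.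
by rewrite /= mulr1 pjoin1.
Qed.

Theorem mainTheorem13 :
  matched_pair F2mul F2e Nmul Ne ex_lact ex_ract /\
  (is_monoid Xmul Xe /\ left_cancellative Xmul /\ finitely_aligned Xmul) /\
  ~ concordant F2mul Xmul Xincl /\
  (forall (A : CstarAlg) (t : F2p -> A) (B : CstarAlg) (s : Xt -> B),
     is_universal_TC F2mul F2e t ->
     is_universal_TC Xmul Xe s ->
     ~ exists Phi : A -> B, is_star_hom Phi /\ forall w, Phi (t w) = s (Xincl w)).
Proof.
split; first exact: mp.
split; first by split; [exact: Xmon | split; [exact: Xlc | exact: Xfa]].
split; first exact: Xnc.
move=> A t B s [[_ [_ t3]] _] [[s1 [s2 _]] univ] [Phi [hPhi hPt]].
have hP := hPhi; case: hP => _ [hmul hstar].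
have hI : forall c, (in_rideal F2mul [:: la] c /\ in_rideal F2mul [:: lb] c) <->
    (exists f, List.In f [::] /\ in_rideal F2mul f c).
  move=> c; split; last by case=> f [].
  by case=> [[r1 e1] [r2 e2]]; rewrite e1 in e2.
have hind : independent F2mul [::] by move=> a a' [].
have [_ h0] := t3 _ _ _ hind hI.
have hB := congr1 Phi h0; rewrite /= (@hom0 _ _ _ hPhi) !hmul !hstar !hPt in hB.
have hmon : forall x, Xmul Xe x = x by case: Xmon => _ [].
have za : ((1%N, [:: la]) : Xt) = Xmul (Xincl [:: la]) (1%N, [::]) by [].
have zb : ((1%N, [:: la]) : Xt) = Xmul (Xincl [:: lb]) (1%N, [::]) by [].
have eb := @proj_mul _ _ _ _ _ hmon s1 s2 (Xincl [:: lb]) (1%N, [::]); rewrite -zb in eb.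
have ea := @proj_mul _ _ _ _ _ hmon s1 s2 (Xincl [:: la]) (1%N, [::]); rewrite -za in ea.
have ka := @starK_mul _ _ _ _ _ hmon s1 s2 (Xincl [:: la]) (1%N, [::]); rewrite -za in ka.
have hz : s (1%N, [::]) = 0.
  have := congr1 (fun P => ca_mul (ca_star (s (Xincl [:: la]))) (ca_mul P (s (1%N, [:: la])))) hB.
  by rewrite /= ca_mul0l ca_mul0r -ca_mulA eb ea ka.
have [[phi [hphi hphis]] _] := univ CCalg _ rep1.
have := hphis (1%N, [::]); rewrite hz (@hom0 _ _ _ hphi) => /esym/eqP.
by rewrite oner_eq0.
Qed.
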